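(* Let $\alpha$ be a nonzero real number. Let $\gamma(t)=\Psi(u(t),v(t))$ be an $\alpha$-stationary curve in $\mathbb H^2$ which is not of constant curvature, parametrized by arc length $t$ and not passing through $N$. Then there is a constant $c>0$ such that, expressing $t$ and $v$ as functions of $u$, $$t(u)=\pm\int^u\frac{s^\alpha\sinh(s)}{\sqrt{s^{2\alpha}\sinh^2(s)-c^2}}\,ds,\qquad v(u)=\pm\int^u\frac{c}{\sinh(s)\sqrt{s^{2\alpha}\sinh^2(s)-c^2}}\,ds.$$
   Context: The hyperbolic plane is $\mathbb H^2=\{(x,y,z):x^2+y^2-z^2=-1,\ z>0\}$ with the metric induced by the Lorentzian inner product $\langle x,y\rangle_\epsilon=x_1y_1+x_2y_2-x_3y_3$. It is parametrized by $\Psi(u,v)=(\sinh u\cos v,\sinh u\sin v,\cosh u)$, and $N=(0,0,1)$. The hyperbolic distance from $\Psi(u,v)$ to $N$ is $u$, and the line element is $\sqrt{u'^2+\sinh^2(u)v'^2}\,dt$. The energy of a curve $\gamma(t)=\Psi(u(t),v(t))$ with $u>0$ is $$E_\alpha[\gamma]=\int u^\alpha\sqrt{u'^2+\sinh^2(u)v'^2}\,dt.$$ The curve is $\alpha$-stationary if it is a critical point of $E_\alpha$, i.e. $(u,v)$ satisfies its Euler–Lagrange equations. Equivalently, its geodesic curvature satisfies $\kappa=\alpha\langle\mathbf n,\xi\rangle_\epsilon/u$, where $\mathbf n$ is the unit normal and $\xi=\Psi_u$. Throughout the paper, $\alpha\ne0$ and curves avoid $N$. Integrals $\int^u$ are indefinite,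 i.e. determined up to additive constants. *)

(* Defs.v *)
From Stdlib Require Import Reals.
From Coquelicot Require Import Coquelicot.
Open Scope R_scope.

Definition in_I (a b : Rbar) (t : R) : Prop := Rbar_lt a t /\ Rbar_lt t b.

Definition C2_on (a b : Rbar) (f : R -> R) : Prop :=
  forall t, in_I a b t -> ex_derive f t /\ ex_derive (Derive f) t.

Definition speed (u v : R -> R) (t : R) : R :=
  sqrt ((Derive u t) ^ 2 + (sinh (u t)) ^ 2 * (Derive v t) ^ 2).

Definition arc_length (a b : Rbar) (u v : R -> R) : Prop :=
  forall t, in_I a b t -> speed u v t = 1.

(* Euler-Lagrange equations of the Lagrangian
     L(u,v,u',v') = u^alpha * sqrt(u'^2 + sinh(u)^2 v'^2)
   (u^alpha = Rpower u alpha, u > 0):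
     d/dt (dL/du') = dL/du,   d/dt (dL/dv') = dL/dv = 0. *)
Definition alpha_stationary (alpha : R) (a b : Rbar) (u v : R -> R) : Prop :=
  forall t, in_I a b t ->
    is_derive (fun s => Rpower (u s) alpha * Derive u s / speed u v s) t
      (alpha * Rpower (u t) (alpha - 1) * speed u v t
       + Rpower (u t) alpha * sinh (u t) * cosh (u t) * (Derive v t) ^ 2
         / speed u v t)
    /\
    is_derive (fun s => Rpower (u s) alpha * (sinh (u s)) ^ 2 * Derive v s
                        / speed u v s) t 0.

(* The curve gamma = Psi(u, v) in R^3 (components). *)
Definition gam1 (u v : R -> R) (t : R) : R := sinh (u t) * cos (v t).
Definition gam2 (u v : R -> R) (t : R) : R := sinh (u t) * sin (v t).
Definition gam3 (u v : R -> R) (t : R) : R := cosh (u t).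

Definition det3 (x1 x2 x3 y1 y2 y3 z1 z2 z3 : R) : R :=
  x1 * (y2 * z3 - y3 * z2) - x2 * (y1 * z3 - y3 * z1) + x3 * (y1 * z2 - y2 * z1).

(* Geodesic curvature of an arc-length parametrized curve gamma in H^2:
   kappa = <gamma'', n>_eps with unit normal n = gamma (x)_eps gamma'
   (Lorentzian cross product, characterized by <x (x)_eps y, z>_eps = det(x,y,z)),
   hence kappa = det(gamma, gamma', gamma''). *)
Definition geod_curv (u v : R -> R) (t : R) : R :=
  det3 (gam1 u v t) (gam2 u v t) (gam3 u v t)
       (Derive (gam1 u v) t) (Derive (gam2 u v) t) (Derive (gam3 u v) t)
       (Derive (Derive (gam1 u v)) t) (Derive (Derive (gam2 u v)) t)
       (Derive (Derive (gam3 u v)) t).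

Definition constant_curvature (a b : Rbar) (u v : R -> R) : Prop :=
  exists k, forall t, in_I a b t -> geod_curv u v t = k.

(* Main.v *)
Require Import Defs.
From Stdlib Require Import Reals Lra Classical.
From Coquelicot Require Import Coquelicot.
Open Scope R_scope.

Lemma in_I_between a b s t x : in_I a b s -> in_I a b t -> Rmin s t <= x <= Rmax s t -> in_I a b x.
Proof.
  intros [H1 H2] [H3 H4] Hx. split.
  - destruct (Rle_dec s t).
    + rewrite Rmin_left in Hx by lra. eapply Rbar_lt_le_trans; [exact H1|]. simpl; lra.
    + rewrite Rmin_right in Hx by lra. eapply Rbar_lt_le_trans; [exact H3|]. simpl; lra.
  - destruct (Rle_dec s t).
    + rewrite Rmax_right in Hx by lra. eapply Rbar_le_lt_trans; [|exact H4]. simpl; lra.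
    + rewrite Rmax_left in Hx by lra. eapply Rbar_le_lt_trans; [|exact H2]. simpl; lra.
Qed.

Lemma in_I_loc a b t : in_I a b t -> locally t (in_I a b).
Proof.
  intros H. apply (open_and (T:=R_UniformSpace) (fun x : R => Rbar_lt a x) (fun x : R => Rbar_lt x b)).
  apply open_Rbar_gt. apply open_Rbar_lt. exact H.
Qed.

Lemma deriv_cont f x l : is_derive f x l -> continuity_pt f x.
Proof. intros H. apply derivable_continuous_pt. exists l. apply is_derive_Reals. exact H. Qed.

Lemma ex_deriv_cont f x : ex_derive f x -> continuity_pt f x.
Proof. intros [l H]. exact (deriv_cont f x l H). Qed.

Lemma const_on_I a b f : (forall t, in_I a b t -> is_derive f t 0) ->
  forall s t, in_I a b s -> in_I a b t -> f s = f t.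
Proof.
  intros Hd s t Hs Ht.
  destruct (MVT_gen f s t (fun _ => 0)) as [c [_ Hc]].
  - intros x Hx. apply Hd. apply (in_I_between a b s t); auto. lra.
  - intros x Hx. apply (deriv_cont f x 0). apply Hd. apply (in_I_between a b s t); auto.
  - lra.
Qed.

Lemma exists_in_I a b : Rbar_lt a b -> exists t, in_I a b t.
Proof.
  destruct a as [a| |]; destruct b as [b| |]; simpl; intros H; try contradiction.
  - exists ((a+b)/2). split; simpl; lra.
  - exists (a+1). split; simpl; auto; lra.
  - exists (b-1). split; simpl; auto; lra.
  - exists 0. split; simpl; auto.
Qed.

Lemma sign_const (f: R->R) p q : (forall t, p<t<q -> continuity_pt f t) ->
  (forall t, p<t<q -> f t <> 0) ->
  (forall t, p<t<q -> 0 < f t) \/ (forall t, p<t<q -> f t < 0).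
Proof.
  intros Hc Hn.
  destruct (classic (forall t, p<t<q -> 0 < f t)) as [H|H]; [left; auto|right].
  apply not_all_ex_not in H as [t1 H]. apply imply_to_and in H as [Ht1 H1].
  assert (F1 : f t1 < 0) by (specialize (Hn t1 Ht1); lra).
  intros t2 Ht2. destruct (Rlt_dec (f t2) 0) as [|H2]; auto. exfalso.
  assert (F2 : 0 < f t2) by (specialize (Hn t2 Ht2); lra).
  destruct (Rtotal_order t1 t2) as [Hlt|[Heq|Hgt]].
  - destruct (IVT_Rbar_incr f t1 t2 (f t1) (f t2) 0) as [z [Hz1 [Hz2 Hz]]].
    + apply is_lim_continuity, Hc; auto.
    + apply is_lim_continuity, Hc; auto.
    + intros x Hx1 Hx2; simpl in *; apply Hc; lra.
    + simpl; lra.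
    + simpl; lra.
    + simpl in *; apply (Hn z); [lra|auto].
  - subst; lra.
  - destruct (IVT_Rbar_decr f t2 t1 (f t2) (f t1) 0) as [z [Hz1 [Hz2 Hz]]].
    + apply is_lim_continuity, Hc; auto.
    + apply is_lim_continuity, Hc; auto.
    + intros x Hx1 Hx2; simpl in *; apply Hc; lra.
    + simpl; lra.
    + simpl; lra.
    + simpl in *; apply (Hn z); [lra|auto].
Qed.
Lemma Derive_scal_I a b f g k : (forall s, in_I a b s -> f s = k * g s) ->
  forall t, in_I a b t -> Derive f t = k * Derive g t /\ Derive (Derive f) t = k * Derive (Derive g) t.
Proof.
  intros H t Ht.
  assert (D1 : forall s, in_I a b s -> Derive f s = k * Derive g s).
  { intros s Hs. rewrite <- Derive_scal. apply Derive_ext_loc.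
    apply (filter_imp (in_I a b)); [intros x Hx; apply H; exact Hx| apply in_I_loc; exact Hs]. }
  split. apply D1; auto.
  rewrite <- Derive_scal. apply Derive_ext_loc.
  apply (filter_imp (in_I a b)); [intros x Hx; apply D1; exact Hx| apply in_I_loc; exact Ht].
Qed.

Lemma curv_v_const a b u v v0 : (forall t, in_I a b t -> v t = v0) ->
  forall t, in_I a b t -> geod_curv u v t = 0.
Proof.
  intros Hv t Ht.
  destruct (Derive_scal_I a b (gam1 u v) (fun s => sinh (u s)) (cos v0)) with (t:=t) as [A1 A2]; auto.
  { intros s Hs. unfold gam1. rewrite Hv by auto. ring. }
  destruct (Derive_scal_I a b (gam2 u v) (fun s => sinh (u s)) (sin v0)) with (t:=t) as [B1 B2]; auto.
  { intros s Hs. unfold gam2. rewrite Hv by auto. ring. }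
  unfold geod_curv, det3. rewrite A1, A2, B1, B2. unfold gam1, gam2. rewrite Hv by auto. ring.
Qed.

Lemma curv_u_const a b u v u0 w : (forall t, in_I a b t -> u t = u0) ->
  (forall t, in_I a b t -> ex_derive v t /\ Derive v t = w) ->
  forall t, in_I a b t -> geod_curv u v t = cosh u0 * sinh u0 ^ 2 * w ^ 3.
Proof.
  intros Hu Hv t Ht.
  assert (Dc : forall s, in_I a b s -> Derive (fun s => cos (v s)) s = - sin (v s) * w).
  { intros s Hs. destruct (Hv s Hs) as [Hex Hw].
    apply is_derive_unique. evar_last. apply (is_derive_comp cos v). apply is_derive_cos.
    apply Derive_correct; exact Hex. rewrite Hw. change (w * (- sin (v s)) = - sin (v s) * w); ring. }
  assert (Ds : forall s, in_I a b s -> Derive (fun s => sin (v s)) s = cos (v s) * w).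
  { intros s Hs. destruct (Hv s Hs) as [Hex Hw].
    apply is_derive_unique. evar_last. apply (is_derive_comp sin v). apply is_derive_sin.
    apply Derive_correct; exact Hex. rewrite Hw. change (w * cos (v s) = cos (v s) * w); ring. }
  destruct (Derive_scal_I a b (Derive (fun s => cos (v s))) (fun s => sin (v s)) (-w)) with (t:=t) as [Ec _]; auto.
  { intros s Hs. rewrite Dc by auto. ring. }
  destruct (Derive_scal_I a b (Derive (fun s => sin (v s))) (fun s => cos (v s)) w) with (t:=t) as [Es _]; auto.
  { intros s Hs. rewrite Ds by auto. ring. }
  destruct (Derive_scal_I a b (gam1 u v) (fun s => cos (v s)) (sinh u0)) with (t:=t) as [A1 A2]; auto.
  { intros s Hs. unfold gam1. rewrite Hu by auto. ring. }
  destruct (Derive_scal_I a b (gam2 u v) (fun s => sin (v s)) (sinh u0)) with (t:=t) as [B1 B2]; auto.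
  { intros s Hs. unfold gam2. rewrite Hu by auto. ring. }
  destruct (Derive_scal_I a b (gam3 u v) (fun s => 1) (cosh u0)) with (t:=t) as [C1 C2]; auto.
  { intros s Hs. unfold gam3. rewrite Hu by auto. ring. }
  unfold geod_curv, det3. rewrite A1, A2, B1, B2, C1, C2, Ec, Es, Dc, Ds by auto.
  rewrite Derive_const. unfold gam1, gam2, gam3. rewrite Hu by auto.
  pose proof (sin2_cos2 (v t)). unfold Rsqr in *.
  replace (cosh u0 * sinh u0 ^ 2 * w ^ 3) with (cosh u0 * sinh u0 ^ 2 * w ^ 3 * (sin (v t) * sin (v t) + cos (v t) * cos (v t))) by (rewrite H; ring).
  rewrite (Derive_ext (Derive (fun _ => 1)) (fun _ => 0)) by (intros; apply Derive_const).
  rewrite Derive_const. ring.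
Qed.

Lemma Rpower_pos x y : 0 < Rpower x y.
Proof. unfold Rpower. apply exp_pos. Qed.

Lemma sinh_pos x : 0 < x -> 0 < sinh x.
Proof. intros H. rewrite <- sinh_0. apply sinh_lt. exact H. Qed.

Lemma in_I_pq (a b : Rbar) (p q t : R) : Rbar_le a p -> Rbar_le q b -> p < t < q -> in_I a b t.
Proof.
  intros H1 H2 Ht. split.
  - apply (Rbar_le_lt_trans a p t H1). simpl. lra.
  - apply (Rbar_lt_le_trans t q b); [simpl; lra|exact H2].
Qed.

Theorem theorem2p9 (alpha : R) (a b : Rbar) (u v : R -> R) :
  alpha <> 0 ->
  Rbar_lt a b ->
  C2_on a b u -> C2_on a b v ->
  (forall t, in_I a b t -> 0 < u t) ->
  arc_length a b u v ->
  alpha_stationary alpha a b u v ->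
  ~ constant_curvature a b u v ->
  exists c : R, 0 < c /\
    (exists t, in_I a b t /\ Derive u t <> 0) /\
    forall p q : R, Rbar_le a p -> p < q -> Rbar_le q b ->
      (forall t, p < t < q -> Derive u t <> 0) ->
      exists e1 e2 : R, (e1 = 1 \/ e1 = -1) /\ (e2 = 1 \/ e2 = -1) /\
        forall t, p < t < q ->
          c ^ 2 < (Rpower (u t) alpha) ^ 2 * (sinh (u t)) ^ 2 /\
          / Derive u t =
            e1 * (Rpower (u t) alpha * sinh (u t)
                  / sqrt ((Rpower (u t) alpha) ^ 2 * (sinh (u t)) ^ 2 - c ^ 2)) /\
          Derive v t / Derive u t =
            e2 * (c / (sinh (u t)
                  * sqrt ((Rpower (u t) alpha) ^ 2 * (sinh (u t)) ^ 2 - c ^ 2))).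
Proof.
  intros Hal Hab Hu2 Hv2 Hpos Harc Hst Hnc.
  set (g := fun s => Rpower (u s) alpha * (sinh (u s)) ^ 2 * Derive v s / speed u v s).
  assert (Hg : forall s t, in_I a b s -> in_I a b t -> g s = g t).
  { apply const_on_I. intros t Ht. apply (proj2 (Hst t Ht)). }
  destruct (exists_in_I a b Hab) as [t0 Ht0].
  set (c0 := g t0).
  assert (Hc0 : forall t, in_I a b t -> Rpower (u t) alpha * sinh (u t) ^ 2 * Derive v t = c0).
  { intros t Ht. unfold c0. rewrite <- (Hg t t0 Ht Ht0). unfold g. rewrite (Harc t Ht). field. }
  assert (Hsh : forall t, in_I a b t -> 0 < sinh (u t)).
  { intros t Ht. apply sinh_pos, Hpos, Ht. }
  assert (Hv' : forall t, in_I a b t -> Derive v t = c0 / (Rpower (u t) alpha * sinh (u t) ^ 2)).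
  { intros t Ht. rewrite <- (Hc0 t Ht). pose proof (Rpower_pos (u t) alpha). pose proof (Hsh t Ht).
    field. split; apply Rgt_not_eq; auto. }
  assert (Hsp : forall t, in_I a b t -> Derive u t ^ 2 = 1 - sinh (u t) ^ 2 * Derive v t ^ 2).
  { intros t Ht. pose proof (Harc t Ht) as H. unfold speed in H.
    set (X := Derive u t ^ 2 + sinh (u t) ^ 2 * Derive v t ^ 2) in H.
    assert (HX : 0 <= X) by (unfold X; nra).
    assert (X = 1). { rewrite <- (sqrt_sqrt X) by exact HX. rewrite H. ring. }
    unfold X in H0. lra. }
  assert (Hc0nz : c0 <> 0).
  { intros E. apply Hnc. exists 0. apply (curv_v_const a b u v (v t0)); auto.
    intros t Ht. apply (const_on_I a b v); auto. intros s Hs.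
    destruct (Hv2 s Hs) as [Hex _]. pose proof (Derive_correct v s Hex) as HD.
    rewrite (Hv' s Hs), E in HD. unfold Rdiv in HD. rewrite Rmult_0_l in HD. exact HD. }
  exists (Rabs c0). split; [apply Rabs_pos_lt; exact Hc0nz|]. split.
  { apply NNPP. intros Hn. apply Hnc.
    assert (Hu0 : forall t, in_I a b t -> u t = u t0).
    { intros t Ht. apply (const_on_I a b u); auto. intros s Hs.
      destruct (Hu2 s Hs) as [Hex _]. pose proof (Derive_correct u s Hex) as HD.
      destruct (Req_dec (Derive u s) 0) as [E|E]. rewrite E in HD; exact HD.
      exfalso. apply Hn. exists s. auto. }
    eexists. apply (curv_u_const a b u v (u t0) (c0 / (Rpower (u t0) alpha * sinh (u t0) ^ 2))); auto.
    intros t Ht. split. apply (Hv2 t Ht). rewrite (Hv' t Ht), (Hu0 t Ht). reflexivity. }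
  intros p q Hap Hpq Hqb Hnz.
  assert (HI : forall t, p < t < q -> in_I a b t) by (intros; eapply in_I_pq; eauto).
  assert (Hsg : (forall t, p<t<q -> 0 < Derive u t) \/ (forall t, p<t<q -> Derive u t < 0)).
  { apply sign_const; auto. intros t Ht. apply ex_deriv_cont. apply (Hu2 t (HI t Ht)). }
  assert (Hmain : forall e1 e2, (forall t, p<t<q -> Rabs (Derive u t) = e1 * Derive u t) ->
     Rabs c0 = e1 * e2 * c0 -> e1 * e1 = 1 -> e2 * e2 = 1 ->
     forall t, p < t < q ->
          Rabs c0 ^ 2 < (Rpower (u t) alpha) ^ 2 * (sinh (u t)) ^ 2 /\
          / Derive u t =
            e1 * (Rpower (u t) alpha * sinh (u t)
                  / sqrt ((Rpower (u t) alpha) ^ 2 * (sinh (u t)) ^ 2 - Rabs c0 ^ 2)) /\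
          Derive v t / Derive u t =
            e2 * (Rabs c0 / (sinh (u t)
                  * sqrt ((Rpower (u t) alpha) ^ 2 * (sinh (u t)) ^ 2 - Rabs c0 ^ 2)))).
  { intros e1 e2 He1 He2 Hee Hee2 t Ht.
    pose proof (HI t Ht) as It.
    pose proof (Rpower_pos (u t) alpha) as HP.
    pose proof (Hsh t It) as HS.
    pose proof (Hnz t Ht) as HD.
    pose proof (Hsp t It) as HD2.
    pose proof (Hc0 t It) as HC.
    set (P := Rpower (u t) alpha) in *. set (S := sinh (u t)) in *.
    set (D := Derive u t) in *. set (V := Derive v t) in *.
    assert (HK : P ^ 2 * S ^ 2 - Rabs c0 ^ 2 = (P * S * D) ^ 2).
    { replace (Rabs c0 ^ 2) with (c0 ^ 2) by (unfold Rabs; destruct Rcase_abs; ring). rewrite <- HC.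
      replace ((P * S * D) ^ 2) with (P ^ 2 * S ^ 2 * D ^ 2) by ring. rewrite HD2. ring. }
    assert (HD2p : 0 < D ^ 2) by (simpl; rewrite Rmult_1_r; apply Rsqr_pos_lt; exact HD).
    assert (HKp : 0 < (P * S * D) ^ 2).
    { replace ((P * S * D) ^ 2) with (P ^ 2 * S ^ 2 * D ^ 2) by ring.
      apply Rmult_lt_0_compat; [apply Rmult_lt_0_compat|]; auto; apply pow_lt; auto. }
    assert (HV : V = c0 / (P * S ^ 2)) by (apply Hv'; auto).
    assert (Hsq : sqrt (P ^ 2 * S ^ 2 - Rabs c0 ^ 2) = P * S * (e1 * D)).
    { rewrite HK, <- Rsqr_pow2, sqrt_Rsqr_abs, !Rabs_mult, (Rabs_pos_eq P), (Rabs_pos_eq S) by lra.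
      rewrite (He1 t Ht : Rabs D = e1 * D). reflexivity. }
    assert (He1nz : e1 <> 0) by (intros E; rewrite E in Hee; lra).
    rewrite Hsq. split; [lra|]. split.
    - field. repeat split; auto; apply Rgt_not_eq; auto.
    - rewrite HV, He2.
      transitivity ((e2 * e2) * (c0 / (P * S ^ 2 * D))).
      + rewrite Hee2. field. repeat split; auto; apply Rgt_not_eq; auto.
      + field. repeat split; auto; apply Rgt_not_eq; auto. }
  destruct Hsg as [Hp|Hn]; destruct (Rlt_le_dec 0 c0) as [Hc|Hc].
  - exists 1, 1. split; [left; auto|]. split; [left; auto|].
    apply Hmain; try ring. intros t Ht. rewrite Rabs_pos_eq by (apply Rlt_le, Hp; auto). ring.
    rewrite Rabs_pos_eq by lra. ring.
  - exists 1, (-1). split; [left; auto|]. split; [right; auto|].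
    apply Hmain; try ring. intros t Ht. rewrite Rabs_pos_eq by (apply Rlt_le, Hp; auto). ring.
    rewrite Rabs_left by lra. ring.
  - exists (-1), (-1). split; [right; auto|]. split; [right; auto|].
    apply Hmain; try ring. intros t Ht. rewrite Rabs_left by (apply Hn; auto). ring.
    rewrite Rabs_pos_eq by lra. ring.
  - exists (-1), 1. split; [right; auto|]. split; [left; auto|].
    apply Hmain; try ring. intros t Ht. rewrite Rabs_left by (apply Hn; auto). ring.
    rewrite Rabs_left by lra. ring.
Qed.
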